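(* Let $\Phi(z)\in K(z)$ have degree $d\ge1$; put $B_0=B_0(\Phi)$ and $c_0=\Phi(0)$. Assume $\Phi$ has no poles in $D(0,B_0)^-$, so that $\Phi(D(0,B_0)^-)=D(c_0,R)^-$ for some $R>0$. Suppose $|c_0|\le1$ and $R\le1$. Then $\mathrm{Lip}_{\mathrm{Berk}}(\Phi|_{[0,\zeta_{0,B_0}]})\le d/B_0$.
   Context: $K$ is a complete, algebraically closed field with a nontrivial nonarchimedean absolute value. $D(a,r)^-=\{z\in K:|z-a|<r\}$. Fix $q>1$. $\mathbf P^1_{\mathrm{Berk}}$ is the Berkovich projective line over $K$ (tree containing $\mathbf P^1(K)$); $\zeta_{a,r}$ is the point of the disc $D(a,r)=\{|z-a|\le r\}$, $\zeta_{a,0}=a$, $\zeta_G=\zeta_{0,1}$; $[x,y]$ unique path, $(x,y]$ half-open. $\rho$ is the logarithmic path metric on $\mathbf H^1=\mathbf P^1_{\mathrm{Berk}}\setminus\mathbf P^1(K)$ (path $\{\zeta_{a,r}:R_1\le r\le R_2\}$ has length $\log_q(R_2/R_1)$); $\mathrm{diam}_G(x)=q^{-\rho(\zeta_G,x)}$ on $\mathbf H^1$, $0$ on $\mathbf P^1(K)$. $x\vee_G y$ first common point of $[x,\zeta_G],[y,\zeta_G]$; $d(x,y)=2\mathrm{diam}_G(x\vee_G y)-\mathrm{diam}_G(x)-\mathrm{diam}_G(y)$. For $S\subseteq\mathbf P^1_{\mathrm{Berk}}$, $\mathrm{Lip}_{\mathrm{Berk}}(\Phi|_S)=\sup_{x\ne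 y\in S}d(\Phi x,\Phi y)/d(x,y)$. For $a\in\mathbf P^1(K)$, $0<r<1$, $Q_{a,r}$ is the point of $[a,\zeta_G]$ with $\mathrm{diam}_G=r$, $\mathcal B(a,r)^-=\{x:Q_{a,r}\in(x,\zeta_G]\}$, $\mathcal B(a,1)^-=\bigcup_{r<1}\mathcal B(a,r)^-$; $B_0(\Phi)=\sup\{0<r\le1:\Phi(\mathcal B(a,r)^-)\ne\mathbf P^1_{\mathrm{Berk}}\ \forall a\in\mathbf P^1(K)\}$. *)

(* Defs.v *)
From HB Require Import structures.
From mathcomp Require Import all_boot all_order all_algebra.
From Stdlib Require Import Reals ClassicalEpsilon.
Set Implicit Arguments. Unset Strict Implicit. Unset Printing Implicit Defensive.
Import GRing.Theory.

Delimit Scope ring_scope with ring.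
Open Scope R_scope.

Record nonarch_abs (K : fieldType) (av : K -> R) : Prop := {
  av_nonneg   : forall x, 0 <= av x;
  av_eq0      : forall x, av x = 0 <-> x = GRing.zero;
  av_mul      : forall x y, av (GRing.mul x y) = av x * av y;
  av_ultra    : forall x y, av (GRing.add x y) <= Rmax (av x) (av y);
  av_nontriv  : exists x, av x <> 0 /\ av x <> 1;
  av_complete : forall u : nat -> K,
      (forall eps, 0 < eps -> exists N, forall m n, (N <= m)%nat -> (N <= n)%nat ->
                    av (GRing.add (u m) (GRing.opp (u n))) < eps) ->
      exists l, forall eps, 0 < eps -> exists N, forall n, (N <= n)%nat ->
                    av (GRing.add (u n) (GRing.opp l)) < eps }.

Definition is_inf (E : R -> Prop) (m : R) : Prop :=
  (forall x, E x -> m <= x) /\ (forall b, (forall x, E x -> b <= x) -> b <= m).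
Definition Rinf (E : R -> Prop) : R := epsilon (inhabits 0) (fun m => is_inf E m).

Section Berk.
Variable K : fieldType.
Variable av : K -> R.

(* Points of the Berkovich affine line: multiplicative seminorms on K[T]
   extending av.  Points of P^1_Berk: [Some x] for x in A^1_Berk, [None] = oo. *)
Definition is_berkA (x : {poly K} -> R) : Prop :=
  (forall c : K, x (c%:P)%ring = av c) /\
  (forall f g, x (f * g)%ring = x f * x g) /\
  (forall f g, x (f + g)%ring <= Rmax (x f) (x g)) /\
  (forall f, 0 <= x f).

Definition P1B := option ({poly K} -> R).

Definition is_berk (p : P1B) : Prop :=
  match p with None => True | Some x => is_berkA x end.

Definition typeI (a : K) : {poly K} -> R := fun f => av (f.[a])%ring.
Definition ptK (a : option K) : P1B := option_map typeI a.

(* zeta_{a,r}: sup norm on the disc D(a,r); f(T+a) = sum b_i T^i,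
   zeta_{a,r}(f) = max_i |b_i| r^i.  For r = 0 this is the type I point a. *)
Definition zeta (a : K) (r : R) : {poly K} -> R := fun f =>
  let g := (f \Po ('X + a%:P))%ring in
  foldr Rmax 0 [seq av (g`_i)%ring * r ^ i | i <- iota 0 (size g)].

Definition phi_deg (P Q : {poly K}) : nat := maxn (size P).-1 (size Q).-1.

(* Q^n f(P/Q) with n = deg f *)
Definition phi_homog (P Q f : {poly K}) : {poly K} :=
  (\sum_(i < size f) f`_i *: (P ^+ i * Q ^+ ((size f).-1 - i)))%ring.

Definition phi_inf (P Q : {poly K}) : P1B :=
  if (size Q < size P)%nat then None
  else Some (typeI (if (size P == size Q)%nat then (lead_coef P / lead_coef Q)%ring else 0%ring)).

(* Action of Phi on P^1_Berk: Phi(x)(f) = x(Q^n f(P/Q)) / x(Q)^n, and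
   Phi(x) = oo when x(Q) = 0 (x a type I pole). *)
Definition phiB (P Q : {poly K}) (p : P1B) : P1B :=
  match p with
  | None => phi_inf P Q
  | Some x =>
      match Req_EM_T (x Q) 0 with
      | left _ => None
      | right _ => Some (fun f => x (phi_homog P Q f) / (x Q) ^ (size f).-1)
      end
  end.

Definition phiK (P Q : {poly K}) (z : K) : K := (P.[z] / Q.[z])%ring.

(* ---- diam_G and the join relative to zeta_G ----
   delta_inf x y = diam(x \/_oo y) = inf_a max(x(T-a), y(T-a)),
   deltaG x y = diam_G(x \/_G y), given by the standard formula
   diam_G(x \/_G y) = diam(x \/_oo y) / (max(1,|x|) max(1,|y|)),
   diam_G(x \/_G oo) = 1/max(1,|x|), diam_G(oo) = 0. *)
Definition delta_inf (x y : {poly K} -> R) : R :=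
  Rinf (fun t => exists a : K,
          t = Rmax (x ('X - a%:P)%ring) (y ('X - a%:P)%ring)).

Definition deltaG (p1 p2 : P1B) : R :=
  match p1, p2 with
  | Some x, Some y => delta_inf x y / (Rmax 1 (x 'X%ring) * Rmax 1 (y 'X%ring))
  | Some x, None => 1 / Rmax 1 (x 'X%ring)
  | None, Some y => 1 / Rmax 1 (y 'X%ring)
  | None, None => 0
  end.

Definition diamG (p : P1B) : R := deltaG p p.

Definition berk_dist (p1 p2 : P1B) : R :=
  2 * deltaG p1 p2 - diamG p1 - diamG p2.

(* Berkovich open ball B(a,r)^- = {x : Q_{a,r} in (x, zeta_G]}
   = {x : diam_G(x \/_G a) < r}  (for 0 < r <= 1). *)
Definition in_ball (a : option K) (r : R) (p : P1B) : Prop :=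
  deltaG p (ptK a) < r.

Definition maps_onto_ball (P Q : {poly K}) (a : option K) (r : R) : Prop :=
  forall y, is_berk y -> exists x, is_berk x /\ in_ball a r x /\ phiB P Q x = y.

Definition B0_set (P Q : {poly K}) (r : R) : Prop :=
  0 < r <= 1 /\ forall a : option K, ~ maps_onto_ball P Q a r.

Definition seg0 (B : R) (p : P1B) : Prop :=
  exists r, 0 <= r <= B /\ p = Some (zeta 0%ring r).

End Berk.

(* Main.v *)
Require Import Defs.
From HB Require Import structures.
From mathcomp Require Import all_boot all_order all_algebra.
From Stdlib Require Import Reals.
From Stdlib Require Import Lra Psatz ClassicalEpsilon.
From mathcomp Require Import zify.
Import GRing.Theory.
Delimit Scope ring_scope with ring.
Open Scope R_scope.

Ltac rmx := repeat (match goal with |- _ -> _ => intro end); unfold Rmax in *; repeat (destruct Rle_dec); try lra.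

Section Av.
Variable K : closedFieldType.
Variable av : K -> R.
Hypothesis hav : nonarch_abs av.

Ltac unify_av := repeat match goal with
 | H : context [av ?x] |- context [av ?y] =>
     assert_fails (constr_eq x y); change (av y) with (av x)
 | H : context [av ?x], H' : context [av ?y] |- _ =>
     assert_fails (constr_eq x y); change (av y) with (av x) in H'
end.
Ltac lra2 := repeat (match goal with |- _ -> _ => intro end); unify_av; lra.
Ltac nra2 := repeat (match goal with |- _ -> _ => intro end); unify_av; nra.
Ltac rmx ::= repeat (match goal with |- _ -> _ => intro end); unify_av; unfold Rmax in *; repeat (destruct Rle_dec); try lra.

Lemma av_ge0 x : 0 <= av x. Proof. exact: av_nonneg hav x. Qed.

Lemma av0 : av 0%ring = 0.
Proof. by apply (av_eq0 hav). Qed.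

Lemma av_mulE x y : av (x * y)%ring = av x * av y.
Proof. apply (av_mul hav). Qed.

Lemma av1 : av 1%ring = 1.
Proof.
have h := av_mulE 1%ring 1%ring. rewrite mulr1 in h.
have hn : av 1%ring <> 0.
  move=> /(av_eq0 hav) h1. by move: (@oner_neq0 K); rewrite h1 eqxx.
have := av_ge0 1%ring. nra.
Qed.

Lemma avN x : av (- x)%ring = av x.
Proof.
have h : av (-1)%ring = 1.
  have := av_mulE (-1)%ring (-1)%ring. rewrite mulrNN mulr1 av1 => h.
  have := av_ge0 (-1)%ring. nra.
by rewrite -mulN1r av_mulE h Rmult_1_l.
Qed.

Lemma av_addle x y : av (x + y)%ring <= Rmax (av x) (av y).
Proof. exact: av_ultra hav x y. Qed.

Lemma av_suble x y : av (x - y)%ring <= Rmax (av x) (av y).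
Proof. by rewrite -(avN y); apply av_addle. Qed.

Lemma av_strict x y : av y < av x -> av (x + y)%ring = av x.
Proof.
move=> h. have h1 := av_addle x y.
have h2 := av_suble (x + y)%ring y. rewrite addrK in h2.
rmx.
Qed.

Lemma av_exp x n : av (x ^+ n)%ring = av x ^ n.
Proof.
elim: n => [|n IH]; first by rewrite expr0 av1.
by rewrite exprS av_mulE IH.
Qed.

Lemma av_sum_le n (f : 'I_n -> K) c :
  0 <= c -> (forall i, av (f i) <= c) -> av (\sum_(i < n) f i)%ring <= c.
Proof.
move=> c0 h. apply: (big_ind (fun x => av x <= c)).
- by rewrite av0.
- move=> x y hx hy. have := av_addle x y. rmx.
- move=> i _; exact: h.
Qed.

Lemma av_inv x : x <> 0%ring -> av (x^-1)%ring = / av x.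
Proof.
move=> hx. have h := av_mulE x (x^-1)%ring.
rewrite mulfV in h; last by apply/eqP.
rewrite av1 in h.
have : av x <> 0 by move/(av_eq0 hav).
move=> hx'. have -> : av (x^-1)%ring = (av x * av (x^-1)%ring) / av x by field. rewrite -h. unfold Rdiv. ring.
Qed.


Lemma foldr_ge (l : seq R) x : List.In x l -> x <= foldr Rmax 0 l.
Proof.
elim: l => [|a l IH] //= [->|h]; first by apply Rmax_l.
apply: Rle_trans (IH h) _; apply Rmax_r.
Qed.

Lemma foldr_ge0 (l : seq R) : 0 <= foldr Rmax 0 l.
Proof. elim: l => [|a l IH] /=; [lra| apply: Rle_trans IH _; apply Rmax_r]. Qed.

Lemma foldr_in (l : seq R) : foldr Rmax 0 l = 0 \/ List.In (foldr Rmax 0 l) l.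
Proof.
elim: l => [|a l IH] /=; first by left.
case: (Rle_or_lt a (foldr Rmax 0 l)) => h.
  rewrite Rmax_right //. case: IH => h'; [by left| by right; right].
rewrite Rmax_left; [by right; left| lra].
Qed.

Lemma In_map_iota (g : nat -> R) m n x :
  List.In x [seq g i | i <- iota m n] <-> exists i, (m <= i < m + n)%nat /\ x = g i.
Proof.
elim: n m => [|n IH] m /=.
  split=> //; case=> i [/andP [h1 h2] _]. rewrite addn0 in h2. lia.
split.
- case=> [<-|/IH [i [/andP [h1 h2] ->]]]; first by exists m; split=> //; lia.
  exists i; split=> //; apply/andP; lia.
- case=> i [/andP [h1 h2] hx]. case: (i =P m) => [e|hne]; first by left; rewrite hx e.
  right; apply/IH; exists i; split=> //; apply/andP; lia.
Qed.

Definition Mx (r : R) (f : {poly K}) : R :=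
  foldr Rmax 0 [seq av f`_i * r ^ i | i <- iota 0 (size f)].

Lemma zeta0E r (f : {poly K}) : zeta av 0%ring r f = Mx r f.
Proof. by rewrite /zeta polyC0 addr0 comp_polyXr. Qed.

Lemma M_ge r (f : {poly K}) i : 0 <= r -> av f`_i * r ^ i <= Mx r f.
Proof.
move=> r0. case: (ltnP i (size f)) => hi.
  apply: foldr_ge; apply/In_map_iota; exists i; split=> //; apply/andP; lia.
rewrite nth_default // av0 Rmult_0_l; apply: foldr_ge0.
Qed.

Lemma M_attained r (f : {poly K}) : exists i, Mx r f = av f`_i * r ^ i.
Proof.
case: (foldr_in [seq av f`_i * r ^ i | i <- iota 0 (size f)]) => h.
  exists (size f). rewrite /Mx h nth_default // av0. ring.
case/In_map_iota: h => i [_ h]. by exists i.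
Qed.

Lemma M_le r (f : {poly K}) c : (forall i, av f`_i * r ^ i <= c) -> Mx r f <= c.
Proof. move=> h; case: (M_attained r f) => i ->; exact: h. Qed.

Lemma M_ge0 r (f : {poly K}) : 0 <= Mx r f.
Proof. apply: foldr_ge0. Qed.

Lemma step_bound r (G : {poly K}) b M : 0 <= r ->
  (forall i, av G`_i * r ^ i <= M) ->
  forall i, av (('X - b%:P) * G)%ring`_i * r ^ i <= M * Rmax r (av b).
Proof.
move=> r0 h i. rewrite mulrBl coefB coefXM coefCM.
have M0 : 0 <= M by have := h O; have := av_ge0 G`_O; simpl; nra.
have hb1 : av b <= Rmax r (av b) by apply Rmax_r.
have hb2 : r <= Rmax r (av b) by apply Rmax_l.
have hb0 := av_ge0 b.
case: i => [|k] /=.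
  rewrite sub0r avN av_mulE Rmult_1_r. have := h O. simpl. rewrite !Rmult_1_r => h0.
apply Rle_trans with (av b * M); first by apply Rmult_le_compat_l; [lra| exact h0].
rewrite (Rmult_comm M); apply Rmult_le_compat_r; lra.
have h1 := av_suble G`_k (b * G`_k.+1)%ring. rewrite av_mulE in h1.
have hk := h k. have hk1 := h k.+1. simpl in hk1.
have hA := av_ge0 G`_k. have hB := av_ge0 G`_k.+1. have hrk := pow_le r k r0.
have hX := av_ge0 (G`_k - b * G`_k.+1)%ring.
set X := av _ in h1 hX *. set A := av G`_k in h1 hk hA. set B := av G`_k.+1 in h1 hk1 hB.
set mb := Rmax r (av b) in hb1 hb2 *.
have hrr : 0 <= r * r ^ k by apply Rmult_le_pos.
case: (Rle_or_lt A (av b * B)) => hc.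
  rewrite Rmax_right // in h1.
  apply Rle_trans with (av b * B * (r * r ^ k)); first by apply Rmult_le_compat_r.
  rewrite Rmult_assoc (Rmult_comm M). apply Rle_trans with (av b * M).
    by apply Rmult_le_compat_l.
  by apply Rmult_le_compat_r.
rewrite Rmax_left in h1; last lra.
apply Rle_trans with (A * (r * r ^ k)); first by apply Rmult_le_compat_r.
have -> : A * (r * r ^ k) = (A * r ^ k) * r by ring.
apply Rle_trans with (M * r); first by apply Rmult_le_compat_r.
by apply Rmult_le_compat_l.
Qed.

Definition prodR (g : K -> R) (l : seq K) : R := foldr (fun b acc => g b * acc) 1 l.

Lemma prodR_ge0 g l : (forall b, 0 <= g b) -> 0 <= prodR g l.
Proof. move=> h; elim: l => [|a l IH] /=; [lra| have := h a; nra]. Qed.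

Lemma prod_bound (lc : K) bs r : 0 <= r -> forall i,
  av (lc%:P * \prod_(b <- bs) ('X - b%:P))%ring`_i * r ^ i
    <= av lc * prodR (fun b => Rmax r (av b)) bs.
Proof.
move=> r0; elim: bs => [|a l IH] i /=.
  rewrite big_nil mulr1 coefC. case: i => [|i] /=; first lra.
  rewrite av0 Rmult_0_l Rmult_1_r; exact: av_ge0.
rewrite big_cons mulrCA.
have := step_bound r _ a _ r0 IH i. rewrite /=. set u := av _. lra.
Qed.

Lemma coef0_XsubCM (a : K) (G : {poly K}) : ((('X - a%:P) * G)`_O = - (a * G`_O))%ring.
Proof. by rewrite mulrBl coefB coefXM coefCM /= sub0r. Qed.

Lemma lowcoef_bound (lc : K) bs r : 0 <= r -> (forall b, b \in bs -> r <= av b) ->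
  forall i, av (lc%:P * \prod_(b <- bs) ('X - b%:P))%ring`_i * r ^ i
    <= av (lc%:P * \prod_(b <- bs) ('X - b%:P))%ring`_O.
Proof.
move=> r0; elim: bs => [|a l IH] hb i /=.
  rewrite big_nil mulr1 !coefC. case: i => [|i] /=.
    rewrite Rmult_1_r; apply Rle_refl.
  rewrite av0 Rmult_0_l; exact: av_ge0.
rewrite big_cons mulrCA.
have hl : forall b, b \in l -> r <= av b by move=> b hbl; apply hb; rewrite inE hbl orbT.
have := step_bound r _ a _ r0 (IH hl) i.
have ha : r <= av a by apply hb; rewrite inE eqxx.
rewrite coef0_XsubCM avN av_mulE. move=> h; apply: Rle_trans h _. rewrite (Rmax_right _ _ ha) Rmult_comm. apply Rle_refl.
Qed.


Lemma av_prod (h : K -> K) (l : seq K) :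
  av (\prod_(w <- l) h w)%ring = prodR (fun w => av (h w)) l.
Proof.
elim: l => [|a l IH] /=; first by rewrite big_nil av1.
by rewrite big_cons av_mulE IH.
Qed.

Lemma prodR_ge1 g l : (forall w, w \in l -> 1 <= g w) -> 1 <= prodR g l.
Proof.
elim: l => [|a l IH] h /=; first lra.
have h1 : 1 <= g a by apply h; rewrite inE eqxx.
have h2 : 1 <= prodR g l by apply IH => w hw; apply h; rewrite inE hw orbT.
nra.
Qed.

Lemma prodR_one g l x : 0 <= x <= 1 -> (forall w, w \in l -> 0 <= g w <= 1) ->
  x * prodR g l = 1 -> x = 1 /\ forall w, w \in l -> g w = 1.
Proof.
elim: l x => [|a l IH] x hx h /=.
  rewrite Rmult_1_r => ->; split=> //.
move=> e.
have ha : 0 <= g a <= 1 by apply h; rewrite inE eqxx.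
have hl : forall w, w \in l -> 0 <= g w <= 1 by move=> w hw; apply h; rewrite inE hw orbT.
have [e1 e2] : x * g a = 1 /\ forall w, w \in l -> g w = 1.
  apply IH => //; first nra. rewrite -e; ring.
have hx1 : x = 1 by nra.
split=> // w; rewrite inE => /orP [/eqP ->|hw]; last exact: e2.
rewrite hx1 in e1; lra.
Qed.

Lemma units_list n : exists ws : seq K, size ws = n /\ uniq ws /\
  (forall w, w \in ws -> av w = 1) /\
  (forall w w', w \in ws -> w' \in ws -> w <> w' -> av (w - w')%ring = 1).
Proof.
elim: n => [|n [ws [hs [hu [h1 h2]]]]]; first by exists [::].
set p := ('X * \prod_(w <- ws) ('X - w%:P) - 1)%ring.
have hp : size p != 1%nat.
  have hpr : (\prod_(w <- ws) ('X - w%:P))%ring != 0%ring.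
    by rewrite -size_poly_eq0 size_prod_XsubC.
  rewrite /p size_addl.
    by rewrite mulrC size_mulX // size_prod_XsubC.
  by rewrite size_opp size_poly1 mulrC size_mulX // size_prod_XsubC.
case/closed_rootP: hp => om /rootP.
rewrite /p hornerD hornerN hornerM hornerX horner_prod hornerC => /eqP.
rewrite subr_eq0 => /eqP e.
move: e. under eq_bigr do rewrite hornerXsubC. move=> e.
have ea : av om * prodR (fun w => av (om - w)%ring) ws = 1.
  by rewrite -av_prod -av_mulE e av1.
have hom : av om <= 1.
  apply Rnot_lt_le => hlt.
  have : 1 <= prodR (fun w => av (om - w)%ring) ws.
    apply prodR_ge1 => w hw. rewrite av_strict; first lra.
    rewrite avN (h1 w hw). exact hlt.
  move: ea. set P0 := prodR _ _. set a0 := av om in hlt *. move=> h3 h4. nra.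
have hall : forall w, w \in ws -> 0 <= av (om - w)%ring <= 1.
  move=> w hw; split; first exact: av_ge0.
  have := av_suble om w. rewrite (h1 w hw). rmx.
have [eo ew] := prodR_one _ _ _ (conj (av_ge0 om) hom) hall ea.
have hno : om \notin ws.
  apply/negP => hin. have := ew om hin. rewrite subrr av0. lra.
exists (om :: ws); split; first by rewrite /= hs.
split; first by rewrite /= hno hu.
split.
  move=> w; rewrite inE => /orP [/eqP ->|hw]; [exact eo| exact: h1].
move=> w w'; rewrite !inE => /orP [/eqP ->|hw] /orP [/eqP ->|hw'] hne //.
- exact: ew.
- by rewrite -opprB avN; apply ew.
- exact: h2.
Qed.


Lemma bernoulli h n : -1 <= h -> 1 + INR n * h <= (1 + h) ^ n.
Proof.
move=> hh; elim: n => [|n IH]; first (simpl; lra).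
rewrite S_INR /=. have := pos_INR n. nra.
Qed.

Lemma exists_big : exists x1, 1 < av x1.
Proof.
case: (av_nontriv hav) => x0 [h0 h1].
have g0 := av_ge0 x0.
case: (Rle_or_lt (av x0) 1) => hc; last by exists x0.
have hx0 : x0 <> 0%ring by move=> e; apply h0; rewrite e av0.
exists (x0^-1)%ring. rewrite av_inv //.
have hlt : 0 < av x0 < 1 by lra.
rewrite -Rinv_1. apply Rinv_lt_contravar; lra.
Qed.

Lemma pow_find q A : 1 < q -> 1 <= A -> forall m, A < q ^ m ->
  exists N, A < q ^ N /\ q ^ N <= A * q.
Proof.
move=> hq hA; elim=> [|m IH] /=; first lra.
move=> hm. case: (Rle_or_lt (q ^ m) A) => hc.
  exists m.+1 => /=; split; first lra. nra.
exact: IH.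
Qed.

Lemma pow_unbounded q A : 1 < q -> exists m, A < q ^ m.
Proof.
move=> hq. have [n hn] := INR_archimed (q - 1) A ltac:(lra).
exists n. have := bernoulli (q - 1) n ltac:(lra).
have -> : 1 + (q - 1) = q by ring. lra.
Qed.

Lemma density a b : 0 < a < b -> exists t, a < av t < b.
Proof.
move=> [ha hab].
have [x1 hx1] := exists_big.
set c := av x1 in hx1.
set lam := b / a.
have hlam : 1 < lam by rewrite /lam; apply (Rmult_lt_reg_r a); [lra|]; field_simplify; lra.
have [n hn] := INR_archimed (lam - 1) c ltac:(lra).
have n0 : (0 < n)%nat.
  case: n hn => [|n] //=; lra.
set p := ('X^n - x1%:P)%ring.
have hp : size p != 1%nat.
  rewrite /p size_addl size_polyXn; first by move: n0; clear; case: n.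
  by rewrite size_opp size_polyC; case: (x1 != 0%ring) => /=; move: n0; clear; case: n.
case/closed_rootP: hp => y /rootP.
rewrite /p hornerD hornerN hornerXn hornerC => /eqP; rewrite subr_eq0 => /eqP ey.
have hq0 := av_ge0 y.
set q := av y in hq0 *.
have hqn : q ^ n = c by rewrite /q -av_exp ey.
have hq1 : 1 < q.
  apply Rnot_le_lt => hle. have : q ^ n <= 1 ^ n by apply pow_incr; lra.
  rewrite pow1 hqn. lra.
have hql : q < lam.
  apply Rnot_le_lt => hle. have : lam ^ n <= q ^ n by apply pow_incr; lra.
  have := bernoulli (lam - 1) n ltac:(lra).
  have -> : 1 + (lam - 1) = lam by ring. lra.
have [M hM] := pow_unbounded q (/ a) hq1.
have hA : 1 <= a * q ^ M.
  have : / a * a = 1 by field; lra.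
  have := pow_lt q M ltac:(lra). nra.
have [m hm] := pow_unbounded q (a * q ^ M) hq1.
have [N [hN1 hN2]] := pow_find _ _ hq1 hA _ hm.
have hy0 : y <> 0%ring by move=> e; move: hq1; rewrite /q e av0; lra.
have hyM : (y ^+ M)%ring <> 0%ring by apply/eqP; rewrite expf_neq0 //; apply/eqP.
exists (y ^+ N / y ^+ M)%ring.
rewrite av_mulE av_inv // !av_exp -/q.
have hqM := pow_lt q M ltac:(lra).
split.
  apply (Rmult_lt_reg_r (q ^ M)); first lra. field_simplify; lra.
apply (Rmult_lt_reg_r (q ^ M)); first lra. field_simplify; try lra.
have : a * q < b.
  have : a * q < a * lam by apply Rmult_lt_compat_l.
  have : a * lam = b by rewrite /lam; field; lra.
  lra.
nra.
Qed.


Lemma good_point (t : K) s : av t = s -> 0 < s -> forall (bs ws : seq K), uniq ws ->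
  (forall w, w \in ws -> av w = 1) ->
  (forall w w', w \in ws -> w' \in ws -> w <> w' -> av (w - w')%ring = 1) ->
  (size bs < size ws)%nat ->
  exists w, w \in ws /\ forall b, b \in bs -> s <= av (t * w - b)%ring.
Proof.
move=> ht s0; elim=> [|b bs IH] ws hu h1 h2 hs.
  case: ws hu h1 h2 hs => [|w ws] //= *. exists w; split=> //; by rewrite inE eqxx.
case: (classic (exists w0, w0 \in ws /\ av (t * w0 - b)%ring < s)) => [[w0 [hw0 hlt]]|hno].
  have hu' := rem_uniq w0 hu.
  have hmem : forall w, w \in rem w0 ws -> w != w0 /\ w \in ws.
    move=> w; rewrite (mem_rem_uniq _ hu) inE => /andP [] //.
  have [w [hw hgood]] : exists w, w \in rem w0 ws /\ forall b, b \in bs -> s <= av (t * w - b)%ring.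
    apply IH => //.
    - by move=> w /hmem [_ ?]; apply h1.
    - by move=> w w' /hmem [_ ?] /hmem [_ ?]; apply h2.
    - rewrite size_rem //=; move: hs => /=; lia.
  have [hne hwin] := hmem w hw.
  exists w; split=> // b'; rewrite inE => /orP [/eqP ->|hb]; last exact: hgood.
  apply Rnot_lt_le => hlt'.
  have e : (t * w - t * w0)%ring = ((t * w - b) - (t * w0 - b))%ring.
    by rewrite opprB addrA subrK.
  have := av_suble (t * w - b)%ring (t * w0 - b)%ring. rewrite -e.
  rewrite -mulrBr av_mulE ht h2 //; last by move/eqP: hne.
  rmx.
have [w [hw hgood]] : exists w, w \in ws /\ forall b, b \in bs -> s <= av (t * w - b)%ring.
  apply IH => //. move: hs => /=; lia.
exists w; split=> // b'; rewrite inE => /orP [/eqP ->|hb]; last exact: hgood.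
apply Rnot_lt_le => hlt'. apply hno; by exists w.
Qed.

Lemma Rinf_eq (E : R -> Prop) m : E m -> (forall x, E x -> m <= x) -> Rinf E = m.
Proof.
move=> hm hl.
have his : is_inf E m.
  split=> // b hb; exact: hb.
rewrite /Rinf.
have := epsilon_spec (inhabits 0) (fun m => is_inf E m) (ex_intro _ m his).
set e := epsilon _ _ => [[h1 h2]].
have := h1 m hm. have := h2 m (proj1 his). lra.
Qed.

Lemma X_eval (z : {poly K} -> R) c rz :
  (forall a, z ('X - a%:P)%ring = Rmax (av (a - c)%ring) rz) -> z 'X%ring = Rmax (av c) rz.
Proof.
move=> h. have -> : 'X%ring = ('X - 0%:P)%ring :> {poly K} by rewrite polyC0 subr0.
by rewrite h sub0r avN.
Qed.

Lemma delta_formula (x y : {poly K} -> R) c rx ry : 0 <= rx -> 0 <= ry ->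
  (forall a, x ('X - a%:P)%ring = Rmax (av (a - c)%ring) rx) ->
  (forall a, y ('X - a%:P)%ring = Rmax (av (a - c)%ring) ry) ->
  delta_inf x y = Rmax rx ry.
Proof.
move=> h0 h1 hx hy. apply Rinf_eq.
  exists c. rewrite hx hy subrr av0. rmx.
move=> t [a ->]. rewrite hx hy. have := av_ge0 (a - c)%ring. rmx.
Qed.

Lemma dist_formula (x y : {poly K} -> R) c rx ry : av c <= 1 -> 0 <= rx <= 1 -> 0 <= ry <= 1 ->
  (forall a, x ('X - a%:P)%ring = Rmax (av (a - c)%ring) rx) ->
  (forall a, y ('X - a%:P)%ring = Rmax (av (a - c)%ring) ry) ->
  berk_dist (Some x) (Some y) = Rabs (rx - ry).
Proof.
move=> hc hrx hry hx hy.
rewrite /berk_dist /diamG /deltaG (X_eval _ _ _ hx) (X_eval _ _ _ hy).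
rewrite (delta_formula _ _ _ _ _ _ _ hx hy) ?(delta_formula _ _ _ _ _ _ _ hx hx)
  ?(delta_formula _ _ _ _ _ _ _ hy hy); try lra.
have -> : Rmax 1 (Rmax (av c) rx) = 1 by rmx.
have -> : Rmax 1 (Rmax (av c) ry) = 1 by rmx.
rewrite !Rmult_1_r.
unfold Rabs; destruct Rcase_abs; rmx.
Qed.

Lemma zeta_XsubC r a : 0 <= r -> zeta av 0%ring r ('X - a%:P)%ring = Rmax (av (a - 0)%ring) r.
Proof.
move=> r0. rewrite zeta0E subr0. apply Rle_antisym.
  apply M_le => i. rewrite coefB coefX coefC.
  case: i => [|[|i]] /=.
    rewrite sub0r avN. rmx.
  rewrite subr0 av1. rmx.
  rewrite subr0 av0. have := pow_le r i.+2 r0. have := av_ge0 a. rmx.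
apply Rmax_lub.
  have := M_ge r ('X - a%:P)%ring O r0. rewrite coefB coefX coefC /= sub0r avN. lra.
have := M_ge r ('X - a%:P)%ring 1%nat r0. rewrite coefB coefX coefC /= subr0 av1. lra.
Qed.

Lemma final_real Z1 Z2 r1 r2 q d B : 0 < q -> 0 < B -> r2 <= r1 -> r1 <> r2 -> Z2 <= Z1 ->
  Z1 - Z2 <= d * q / B * (r1 - r2) -> Rabs (Z1 / q - Z2 / q) / Rabs (r1 - r2) <= d / B.
Proof.
move=> hq hB h12 hne hZ hl.
have hd : 0 < r1 - r2 by lra.
have hZq : 0 <= Z1 / q - Z2 / q.
  have -> : Z1 / q - Z2 / q = (Z1 - Z2) * / q by field; lra.
  apply Rmult_le_pos; [lra| apply Rlt_le, Rinv_0_lt_compat; lra].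
rewrite (Rabs_right (Z1 / q - Z2 / q)); last lra.
rewrite (Rabs_right (r1 - r2)); last lra.
have -> : (Z1 / q - Z2 / q) / (r1 - r2) = (Z1 - Z2) * / (q * (r1 - r2)) by field; lra.
have -> : d / B = (d * q / B * (r1 - r2)) * / (q * (r1 - r2)) by field; lra.
apply Rmult_le_compat_r => //. apply Rlt_le, Rinv_0_lt_compat. nra.
Qed.

Lemma pow_diff a b k : 0 <= b <= a -> a ^ k.+1 - b ^ k.+1 <= INR k.+1 * a ^ k * (a - b).
Proof.
move=> hab. elim: k => [|k IH]; first by simpl; lra.
have e : a ^ k.+2 - b ^ k.+2 = a * (a ^ k.+1 - b ^ k.+1) + b ^ k.+1 * (a - b) by simpl; ring.
have e2 : INR k.+2 * a ^ k.+1 * (a - b) = a * (INR k.+1 * a ^ k * (a - b)) + a ^ k.+1 * (a - b).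
  rewrite (S_INR k.+1) /=. ring.
rewrite e e2.
have h1 : a * (a ^ k.+1 - b ^ k.+1) <= a * (INR k.+1 * a ^ k * (a - b)) by apply Rmult_le_compat_l; lra.
have h2 : b ^ k.+1 * (a - b) <= a ^ k.+1 * (a - b).
  apply Rmult_le_compat_r; first lra. apply pow_incr; lra.
lra.
Qed.

Lemma prodR_mono g h l : (forall b, b \in l -> 0 <= g b <= h b) -> prodR g l <= prodR h l.
Proof.
elim: l => [|a l IH] hl /=; first lra.
have ha : 0 <= g a <= h a by apply hl; rewrite inE eqxx.
have hl' : forall b, b \in l -> 0 <= g b <= h b by move=> b hb; apply hl; rewrite inE hb orbT.
have := IH hl'.
have : 0 <= prodR g l.
  elim: (l) hl' => [|a' l' IH'] hl'' /=; first lra.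
  have : 0 <= g a' by apply hl''; rewrite inE eqxx.
  have : 0 <= prodR g l' by apply IH' => b hb; apply hl''; rewrite inE hb orbT.
  nra.
nra.
Qed.

Section Main.
Variables (P Q : {poly K}) (hQ : Q <> 0%ring) (B0 : R)
  (hB0 : is_lub (B0_set av P Q) B0)
  (hpoles : forall z : K, av z < B0 -> Q.[z]%ring <> 0%ring)
  (R0 : R) (hR0 : 0 < R0)
  (himg : forall w : K,
      (exists z : K, av z < B0 /\ w = phiK P Q z) <->
      av (w - phiK P Q 0%ring)%ring < R0)
  (hc0 : av (phiK P Q 0%ring) <= 1)
  (hR : R0 <= 1).

Local Notation c0 := (phiK P Q 0%ring).
Local Notation F := (P - c0 *: Q)%ring.

Lemma B0_pos : 0 < B0 /\ B0 <= 1.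
Proof.
case: hB0 => hub hl. split.
  apply Rnot_le_lt => hle.
  have : B0 <= B0 - 1.
    apply hl => r hr. have := hub r hr. case: hr => [[h1 h2] _]. lra2.
  lra2.
apply hl => r [[_ h] _]; exact h.
Qed.

Lemma Q0_ne : (Q`_O <> 0)%ring.
Proof.
rewrite -horner_coef0. apply hpoles. rewrite av0. exact: (proj1 B0_pos).
Qed.

Lemma q_pos : 0 < av Q`_O.
Proof.
have := av_ge0 Q`_O. have : av Q`_O <> 0 by move/(av_eq0 hav); exact: Q0_ne.
lra2.
Qed.

Lemma lowQ r : 0 <= r <= B0 -> forall i, av Q`_i * r ^ i <= av Q`_O.
Proof.
move=> [r0 rB].
have [rs hrs] := closed_field_poly_normal Q.
rewrite hrs -mul_polyC.
apply lowcoef_bound => // b hb.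
apply Rnot_lt_le => hlt.
have : av b < B0 by lra2.
move/hpoles; apply.
rewrite hrs hornerZ.
have : root (\prod_(z <- rs) ('X - z%:P)) b by rewrite root_prod_XsubC.
by move/rootP => ->; rewrite mulr0.
Qed.

Lemma F0 : (F`_O = 0)%ring.
Proof.
rewrite coefB coefZ /phiK -!horner_coef0 divfK ?subrr //.
apply/eqP; rewrite horner_coef0; exact: Q0_ne.
Qed.

Lemma MQ r : 0 <= r <= B0 -> Mx r Q = av Q`_O.
Proof.
move=> hr. apply Rle_antisym; first by apply M_le; apply lowQ.
have := M_ge r Q O (proj1 hr). rewrite /= Rmult_1_r. by [].
Qed.

Lemma keyG r e : 0 <= r <= B0 -> Mx r (F - e *: Q)%ring = Rmax (av e * av Q`_O) (Mx r F).
Proof.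
move=> hr. have r0 := proj1 hr.
have hcoef : forall i, ((F - e *: Q)`_i = F`_i - e * Q`_i)%ring by move=> i; rewrite coefB coefZ.
have hA : av e * av Q`_O <= Mx r (F - e *: Q)%ring.
  have := M_ge r (F - e *: Q)%ring O r0. rewrite hcoef F0 sub0r avN av_mulE /= Rmult_1_r. by [].
apply Rle_antisym.
- apply M_le => i. rewrite hcoef.
  have h1 := av_suble F`_i (e * Q`_i)%ring. rewrite av_mulE in h1.
  have h2 := lowQ r hr i. have h3 := M_ge r F i r0. have hp := pow_le r i r0.
  have he := av_ge0 e. have hq := av_ge0 Q`_i. have hf := av_ge0 F`_i.
  have hx := av_ge0 (F`_i - e * Q`_i)%ring.
  case: (Rle_or_lt (av F`_i) (av e * av Q`_i)) => hc.
    rewrite Rmax_right // in h1.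
    apply Rle_trans with (av e * av Q`_i * r ^ i); first by apply Rmult_le_compat_r.
    apply Rle_trans with (av e * av Q`_O); last by apply Rmax_l.
    rewrite Rmult_assoc. by apply Rmult_le_compat_l.
  rewrite Rmax_left in h1; last by apply Rlt_le.
  apply Rle_trans with (av F`_i * r ^ i); first by apply Rmult_le_compat_r.
  apply: Rle_trans h3 _. apply Rmax_r.
- apply Rmax_lub => //.
  have [j hj] := M_attained r F.
  case: (Rle_or_lt (Mx r F) (av e * av Q`_O)) => hc; first by apply: Rle_trans hc hA.
  have hQj := lowQ r hr j.
  have he := av_ge0 e. have hq := av_ge0 Q`_j. have hf := av_ge0 F`_j.
  have hp := pow_le r j r0.
  have hlt : av e * av Q`_j * r ^ j < av F`_j * r ^ j.
    rewrite -hj. apply: Rle_lt_trans hc. rewrite Rmult_assoc.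
    by apply Rmult_le_compat_l.
  have hpj : 0 < r ^ j.
    case: (Rle_lt_or_eq_dec _ _ hp) => // e0. rewrite -e0 !Rmult_0_r in hlt. lra2.
  have hlt2 : av (- (e * Q`_j))%ring < av F`_j.
    rewrite avN av_mulE. apply (Rmult_lt_reg_r (r ^ j)) => //.
  have := M_ge r (F - e *: Q)%ring j r0. rewrite hcoef av_strict // -hj. by [].
Qed.

Lemma horner_bound z : av z < B0 -> av Q.[z]%ring <= av Q`_O.
Proof.
move=> hz. rewrite horner_coef. apply av_sum_le; first exact: (Rlt_le _ _ q_pos).
move=> i. rewrite av_mulE av_exp. apply lowQ. split; [exact: av_ge0| lra2].
Qed.

Lemma Fz_lt z : av z < B0 -> av F.[z]%ring < av Q`_O.
Proof.
move=> hz. have hQz := hpoles z hz.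
have e : (F.[z] = (phiK P Q z - c0) * Q.[z])%ring.
  rewrite hornerD hornerN hornerZ mulrBl.
  have -> : phiK P Q z = (P.[z] / Q.[z])%ring by [].
  by rewrite divfK //; apply/eqP.
have him := (himg (phiK P Q z)).1 (ex_intro _ z (conj hz erefl)).
rewrite e av_mulE.
have hb := horner_bound z hz.
have hpos : 0 < av Q.[z]%ring.
  have := av_ge0 Q.[z]%ring. have : av Q.[z]%ring <> 0 by move/(av_eq0 hav).
  lra2.
have h0 := av_ge0 (phiK P Q z - c0)%ring.
set u := av (phiK P Q z - c0)%ring in him h0 *.
set v := av Q.[z]%ring in hb hpos *.
set q := av Q`_O in hb *.
nra2.
Qed.

Lemma coefB0 i : av F`_i * B0 ^ i <= av Q`_O.
Proof.
apply Rnot_lt_le => hgt.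
have [hB0p hB01] := B0_pos.
have hq := q_pos.
case: i hgt => [|k] hgt.
  move: hgt; rewrite F0 av0 /= => hh. lra2.
set i := k.+1 in hgt *.
have hBi : 0 < B0 ^ i by apply pow_lt.
have hf0 := av_ge0 F`_i.
set f := av F`_i in hgt hf0 *.
set q := av Q`_O in hgt hq *.
have hf : 0 < f.
  case: (Rle_lt_or_eq_dec _ _ hf0) => // e. rewrite -e in hgt. lra2.
set lam := q / (f * B0 ^ i).
have hfB : 0 < f * B0 ^ i by apply Rmult_lt_0_compat.
have hlam0 : 0 < lam by apply Rdiv_lt_0_compat.
have hlam1 : lam < 1.
  rewrite /lam. apply (Rmult_lt_reg_r (f * B0 ^ i)) => //. field_simplify; lra2.
have hi : 1 <= INR i by rewrite /i S_INR; have := pos_INR k; lra2.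
set eps := (1 - lam) / (2 * INR i).
have heps0 : 0 < eps by apply Rdiv_lt_0_compat; lra2.
have heps1 : INR i * eps = (1 - lam) / 2 by rewrite /eps; field; lra2.
have heps2 : eps <= 1 / 2.
  have : eps <= INR i * eps by nra2.
  lra2.
set s0 := B0 * (1 - eps).
have hs00 : 0 < s0 by apply Rmult_lt_0_compat; lra2.
have hs0B : s0 < B0 by rewrite /s0; nra2.
have hfs0 : q < f * s0 ^ i.
  have hb := bernoulli (- eps) i ltac:(lra2).
  have -> : f * s0 ^ i = (f * B0 ^ i) * (1 + - eps) ^ i.
    rewrite /s0 Rpow_mult_distr. have -> : 1 + - eps = 1 - eps by ring. ring.
  have eq : q = (f * B0 ^ i) * lam by rewrite /lam; field; lra2.
  rewrite eq. apply Rmult_lt_compat_l => //. lra2.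
have [t [ht1 ht2]] := density s0 B0 (conj hs00 hs0B).
set s := av t in ht1 ht2.
have hs0 : 0 < s by lra2.
have hfs : q < f * s ^ i.
  apply: Rlt_le_trans hfs0 _. apply Rmult_le_compat_l; first lra2.
  apply pow_incr; lra2.
have [bs hbs] := closed_field_poly_normal F.
have [ws [hws [hu [h1 h2]]]] := units_list (size bs).+1.
have [w [hw hgood]] := good_point t s erefl hs0 bs ws hu h1 h2 ltac:(rewrite hws; lia).
set z := (t * w)%ring.
have hz : av z = s by rewrite /z av_mulE (h1 w hw) Rmult_1_r.
have hzB : av z < B0 by lra2.
have hFz := Fz_lt z hzB.
have eFz : av F.[z]%ring = av (lead_coef F) * prodR (fun b => av (z - b)%ring) bs.
  rewrite {1}hbs hornerZ horner_prod av_mulE.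
  under eq_bigr do rewrite hornerXsubC.
  by rewrite av_prod.
have hpb := prod_bound (lead_coef F) bs s (Rlt_le _ _ hs0) i.
have eF : ((lead_coef F)%:P * \prod_(b <- bs) ('X - b%:P))%ring = F by rewrite mul_polyC -hbs.
rewrite eF -/f in hpb.
have hmono : prodR (fun b => Rmax s (av b)) bs <= prodR (fun b => av (z - b)%ring) bs.
  apply prodR_mono => b hb. split; first by have := Rmax_l s (av b); lra2.
  apply Rmax_lub; first exact: hgood.
  case: (Rle_or_lt (av b) s) => hc; first by apply: Rle_trans hc _; apply hgood.
  rewrite addrC av_strict; rewrite ?avN ?hz //; apply Rle_refl.
have hlc := av_ge0 (lead_coef F).
have : av (lead_coef F) * prodR (fun b => Rmax s (av b)) bs <=
       av (lead_coef F) * prodR (fun b => av (z - b)%ring) bs by apply Rmult_le_compat_l.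
rewrite -eFz => hh. subst q f. lra2.
Qed.

Lemma Zle r : 0 <= r <= B0 -> Mx r F <= av Q`_O.
Proof.
move=> hr. apply M_le => i. apply: Rle_trans (coefB0 i).
apply Rmult_le_compat_l; first exact: av_ge0. apply pow_incr; lra2.
Qed.

Lemma sizeF : (size F <= maxn (size P) (size Q))%nat.
Proof.
apply: leq_trans (size_add _ _) _. rewrite size_opp.
by rewrite geq_max leq_maxl /= (leq_trans (size_scale_leq _ _)) // leq_maxr.
Qed.

Lemma lip r1 r2 : 0 <= r2 <= r1 -> r1 <= B0 ->
  Mx r2 F <= Mx r1 F /\ Mx r1 F - Mx r2 F <= INR (phi_deg P Q) * av Q`_O / B0 * (r1 - r2).
Proof.
move=> hr hr1. have [hB0p hB01] := B0_pos. have hq := q_pos.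
split.
  apply M_le => i. apply: Rle_trans (M_ge r1 F i ltac:(lra2)).
  apply Rmult_le_compat_l; first exact: av_ge0. apply pow_incr; lra2.
have hRR : 0 <= INR (phi_deg P Q) * av Q`_O / B0 * (r1 - r2).
  apply Rmult_le_pos; last lra2. apply Rmult_le_pos; last by apply Rlt_le, Rinv_0_lt_compat.
  apply Rmult_le_pos; [exact: pos_INR| lra2].
have [j hj] := M_attained r1 F.
have h2 := M_ge r2 F j ltac:(lra2).
rewrite hj.
case: j hj h2 => [|k] hj h2.
  move: h2. rewrite F0 av0 !Rmult_0_l. have := M_ge0 r2 F. lra2.
case: (leqP (size F) k.+1) => hs.
  move: h2. rewrite nth_default // av0 !Rmult_0_l. have := M_ge0 r2 F. lra2.
have hkd : (k.+1 <= phi_deg P Q)%nat.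
  have h := leq_trans hs sizeF. move: h. rewrite /phi_deg. set a := size P. set b := size Q. rewrite !maxnE -!subn1. lia.
have hkd' : INR k.+1 <= INR (phi_deg P Q) by apply le_INR; apply/leP.
have hf := av_ge0 F`_k.+1.
have hc := coefB0 k.+1.
have hpd := pow_diff r1 r2 k hr.
set f := av F`_k.+1 in hf hc h2 hpd *.
set q := av Q`_O in hc hRR hq *.
have hfB : f * B0 ^ k <= q / B0.
  apply (Rmult_le_reg_r B0) => //. field_simplify; last lra2. simpl in hc. lra2.
have hrk : r1 ^ k <= B0 ^ k by apply pow_incr; lra2.
have h3 : f * r1 ^ k.+1 - Mx r2 F <= f * (INR k.+1 * r1 ^ k * (r1 - r2)).
  have : f * (r1 ^ k.+1 - r2 ^ k.+1) <= f * (INR k.+1 * r1 ^ k * (r1 - r2)).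
    by apply Rmult_le_compat_l.
  lra2.
apply: Rle_trans h3 _.
have hpos : 0 <= INR k.+1 * (r1 - r2) by apply Rmult_le_pos; [exact: pos_INR| lra2].
have h4 : f * r1 ^ k <= q / B0.
  apply: Rle_trans hfB. apply Rmult_le_compat_l => //.
have -> : f * (INR k.+1 * r1 ^ k * (r1 - r2)) = (f * r1 ^ k) * (INR k.+1 * (r1 - r2)) by ring.
have -> : INR (phi_deg P Q) * q / B0 * (r1 - r2) = (q / B0) * (INR (phi_deg P Q) * (r1 - r2)) by field; lra2.
apply Rmult_le_compat => //.
  apply Rmult_le_pos => //. apply pow_le; lra2.
apply Rmult_le_compat_r; lra2.
Qed.

Lemma ph_XsubC a : phi_homog P Q ('X - a%:P)%ring = (P - a *: Q)%ring.
Proof.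
rewrite /phi_homog size_XsubC !big_ord_recl big_ord0 /=.
rewrite !coefB !coefX !coefC /bump /=. rewrite expr0 mul1r sub0r subr0 scale1r addr0 scaleNr expr1 expr0 mulr1 expr1 addrC.
by [].
Qed.

Lemma rmax_div x z q : 0 < q -> Rmax (x * q) z / q = Rmax x (z / q).
Proof.
move=> hq. case: (Rle_or_lt x (z / q)) => h.
  have : x * q <= z.
    have -> : z = (z / q) * q by field; lra.
    apply Rmult_le_compat_r; lra.
  move=> h2. rewrite !Rmax_right //.
have : z < x * q.
  have -> : z = (z / q) * q by field; lra.
  apply Rmult_lt_compat_r; lra.
move=> h2. rewrite !Rmax_left; try lra. field; lra.
Qed.

Lemma phiB_zeta r : 0 <= r <= B0 -> exists u, phiB av P Q (Some (zeta av 0%ring r)) = Some u /\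
  forall a, u ('X - a%:P)%ring = Rmax (av (a - c0)%ring) (Mx r F / av Q`_O).
Proof.
move=> hr. have hq := q_pos. rewrite /phiB. case: (Req_EM_T _ _) => [e|ne].
  exfalso. rewrite zeta0E MQ // in e. lra2.
eexists; split; first reflexivity.
move=> a /=. rewrite size_XsubC /= ph_XsubC !zeta0E MQ //.
have -> : (P - a *: Q)%ring = (F - (a - c0) *: Q)%ring.
  by rewrite scalerBl opprB addrA subrK.
rewrite keyG // Rmult_1_r rmax_div //.
Qed.

Lemma main_ineq : forall x y : P1B K,
    seg0 av B0 x -> seg0 av B0 y -> x <> y ->
    berk_dist (phiB av P Q x) (phiB av P Q y) / berk_dist x y
      <= INR (phi_deg P Q) / B0.
Proof.
move=> x y [r1 [hr1 ->]] [r2 [hr2 ->]] hxy.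
have hne : r1 <> r2 by move=> e; apply hxy; rewrite e.
have [hB0p hB01] := B0_pos. have hq := q_pos.
have [u1 [e1 hu1]] := phiB_zeta r1 hr1. have [u2 [e2 hu2]] := phiB_zeta r2 hr2.
rewrite e1 e2.
have hz1 := Zle r1 hr1. have hz2 := Zle r2 hr2.
have hm1 := M_ge0 r1 F. have hm2 := M_ge0 r2 F.
have hrho : forall Z, 0 <= Z -> Z <= av Q`_O -> 0 <= Z / av Q`_O <= 1.
  move=> Z h0 h1. split.
    apply Rmult_le_pos => //. apply Rlt_le, Rinv_0_lt_compat. lra2.
  have -> : 1 = av Q`_O / av Q`_O by field; lra2.
  apply Rmult_le_compat_r => //. apply Rlt_le, Rinv_0_lt_compat. lra2.
rewrite (dist_formula _ _ _ _ _ hc0 (hrho _ hm1 hz1) (hrho _ hm2 hz2) hu1 hu2).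
have h0 : av 0%ring <= 1 by rewrite av0; lra.
rewrite (dist_formula _ _ 0%ring r1 r2 h0 ltac:(lra2) ltac:(lra2)
  (fun a => zeta_XsubC r1 a (proj1 hr1)) (fun a => zeta_XsubC r2 a (proj1 hr2))).
case: (Rle_or_lt r2 r1) => h12.
  have [hmo hl] := lip r1 r2 (conj (proj1 hr2) h12) (proj2 hr1).
  exact: final_real.
have [hmo hl] := lip r2 r1 (conj (proj1 hr1) (Rlt_le _ _ h12)) (proj2 hr2).
rewrite Rabs_minus_sym (Rabs_minus_sym r1).
apply final_real => //; try lra; by move=> e; apply hne.
Qed.

End Main.
End Av.

Theorem proposition5p2
  (K : closedFieldType) (av : K -> R) (hav : nonarch_abs av)
  (P Q : {poly K}) (hQ : Q <> 0%ring) (hcop : coprimep P Q)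
  (hd : (1 <= phi_deg P Q)%nat)
  (B0 : R) (hB0 : is_lub (B0_set av P Q) B0)
  (hpoles : forall z : K, av z < B0 -> Q.[z]%ring <> 0%ring)
  (R0 : R) (hR0 : 0 < R0)
  (himg : forall w : K,
      (exists z : K, av z < B0 /\ w = phiK P Q z) <->
      av (w - phiK P Q 0%ring)%ring < R0)
  (hc0 : av (phiK P Q 0%ring) <= 1)
  (hR : R0 <= 1) :
  forall x y : P1B K,
    seg0 av B0 x -> seg0 av B0 y -> x <> y ->
    berk_dist (phiB av P Q x) (phiB av P Q y) / berk_dist x y
      <= INR (phi_deg P Q) / B0.
Proof.
exact (main_ineq K av hav P Q B0 hB0 hpoles R0 himg hc0 hR).
Qed.
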